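(* Let $\Gamma$ be a group with a strictly decreasing sequence $\{\Gamma_n\}$ of finite-index normal subgroups with trivial intersection, $Z=\varprojlim\Gamma/\Gamma_n$ with the left translation action, $\pi_n:Z\to\Gamma/\Gamma_n$ the quotient maps, and for $n\ge2$ let $\gamma_n\in\Gamma_{n-1}\setminus\Gamma_n$ with $\gamma_n^2\notin\Gamma_n$, and $C_n=\pi_n^{-1}(\gamma_n\Gamma_n)$. Let $s_1,s_2\in\Gamma$ and $z,z'\in Z$ with $s_1z\in C_{n_1}$, $s_2z\in C_{n_2}$ where $n_1<n_2$, and $s_1z'\in C_{m_1}$, $s_2z'\in C_{m_2}$. Then $s_1s_2^{-1}\in\gamma_{n_1}\Gamma_{n_1}$, and either (1) $m_1=n_1<m_2$, or (2) $m_1=m_2<n_1$.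
   Context: $Z=\varprojlim\Gamma/\Gamma_n$ is the compact group of compatible sequences in $\prod_n\Gamma/\Gamma_n$, containing $\Gamma$ as a subgroup. All indices are $\ge2$. (In the paper $\Gamma$ is a finitely generated nonabelian free group.) *)

(* Defs.v *)
From Stdlib Require Import List Arith.
Import ListNotations.

Section GroupDefs.
Context {G : Type} (mul : G -> G -> G) (inv : G -> G) (e : G).

Record is_group : Prop := {
  mulA : forall x y z, mul x (mul y z) = mul (mul x y) z;
  mul1g : forall x, mul e x = x;
  mulg1 : forall x, mul x e = x;
  mulVg : forall x, mul (inv x) x = e;
  mulgV : forall x, mul x (inv x) = e }.

Record is_normal_subgroup (H : G -> Prop) : Prop := {
  sg1 : H e;
  sgM : forall x y, H x -> H y -> H (mul x y);
  sgV : forall x, H x -> H (inv x);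
  sgJ : forall g h, H h -> H (mul (mul g h) (inv g)) }.

Definition finite_index (H : G -> Prop) : Prop :=
  exists l : list G, forall g, exists r, In r l /\ H (mul (inv r) g).

Definition in_coset (H : G -> Prop) (a x : G) : Prop := H (mul (inv a) x).

(* Points of Z = lim Gamma/Gamma_n (indices n >= 1), represented by a
   sequence of representatives z n of the coset pi_n(z) = (z n) Gamma_n,
   subject to compatibility of the projections Gamma/Gamma_m -> Gamma/Gamma_n. *)
Definition is_Zpoint (Gam : nat -> G -> Prop) (z : nat -> G) : Prop :=
  forall n m, 1 <= n -> n <= m -> Gam n (mul (inv (z n)) (z m)).

Definition translate (s : G) (z : nat -> G) : nat -> G := fun n => mul s (z n).

Definition in_C (Gam : nat -> G -> Prop) (gamma : nat -> G) (n : nat) (z : nat -> G) : Prop :=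
  in_coset (Gam n) (gamma n) (z n).

End GroupDefs.

(* Main.v *)
Require Import Defs.
From Stdlib Require Import List Arith Lia.

Lemma g_canc1 {G} {mul : G -> G -> G} {inv e} (Hg : is_group mul inv e) x y :
  mul x (mul (inv x) y) = y.
Proof. rewrite (mulA _ _ _ Hg), (mulgV _ _ _ Hg), (mul1g _ _ _ Hg). reflexivity. Qed.
Lemma g_canc2 {G} {mul : G -> G -> G} {inv e} (Hg : is_group mul inv e) x y :
  mul (inv x) (mul x y) = y.
Proof. rewrite (mulA _ _ _ Hg), (mulVg _ _ _ Hg), (mul1g _ _ _ Hg). reflexivity. Qed.
Lemma g_inv_uniq {G} {mul : G -> G -> G} {inv e} (Hg : is_group mul inv e) x y :
  mul x y = e -> inv x = y.
Proof. intro H. rewrite <- (g_canc2 Hg x y), H, (mulg1 _ _ _ Hg). reflexivity. Qed.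
Lemma g_inv_inv {G} {mul : G -> G -> G} {inv e} (Hg : is_group mul inv e) x :
  inv (inv x) = x.
Proof. apply (g_inv_uniq Hg). apply (mulVg _ _ _ Hg). Qed.
Lemma g_inv_mul {G} {mul : G -> G -> G} {inv e} (Hg : is_group mul inv e) x y :
  inv (mul x y) = mul (inv y) (inv x).
Proof. apply (g_inv_uniq Hg). rewrite <- (mulA _ _ _ Hg), (g_canc1 Hg), (mulgV _ _ _ Hg).
  reflexivity. Qed.

Ltac gs Hg := repeat first
  [ rewrite (g_inv_mul Hg) | rewrite (g_inv_inv Hg) | rewrite <- (mulA _ _ _ Hg)
  | rewrite (mul1g _ _ _ Hg) | rewrite (mulg1 _ _ _ Hg) | rewrite (mulgV _ _ _ Hg)
  | rewrite (mulVg _ _ _ Hg) | rewrite (g_canc1 Hg) | rewrite (g_canc2 Hg) ].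

Theorem lemma5p9 (G : Type) (mul : G -> G -> G) (inv : G -> G) (e : G)
  (Hgrp : is_group mul inv e)
  (Gam : nat -> G -> Prop)
  (Hnormal : forall n, 1 <= n -> is_normal_subgroup mul inv e (Gam n))
  (Hfin : forall n, 1 <= n -> finite_index mul inv (Gam n))
  (Hdecr : forall n, 1 <= n ->
     (forall x, Gam (S n) x -> Gam n x) /\ (exists x, Gam n x /\ ~ Gam (S n) x))
  (Htriv : forall x, (forall n, 1 <= n -> Gam n x) -> x = e)
  (gamma : nat -> G)
  (Hgamma : forall n, 2 <= n ->
     Gam (n - 1) (gamma n) /\ ~ Gam n (gamma n) /\ ~ Gam n (mul (gamma n) (gamma n)))
  (s1 s2 : G) (z z' : nat -> G)
  (Hz : is_Zpoint mul inv Gam z) (Hz' : is_Zpoint mul inv Gam z')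
  (n1 n2 m1 m2 : nat)
  (Hn1 : 2 <= n1) (Hn2 : 2 <= n2) (Hm1 : 2 <= m1) (Hm2 : 2 <= m2)
  (Hn12 : n1 < n2)
  (H1 : in_C mul inv Gam gamma n1 (translate mul s1 z))
  (H2 : in_C mul inv Gam gamma n2 (translate mul s2 z))
  (H1' : in_C mul inv Gam gamma m1 (translate mul s1 z'))
  (H2' : in_C mul inv Gam gamma m2 (translate mul s2 z')) :
  in_coset mul inv (Gam n1) (gamma n1) (mul s1 (inv s2)) /\
  ((m1 = n1 /\ n1 < m2) \/ (m1 = m2 /\ m2 < n1)).
Proof.
  unfold in_C, in_coset, translate in *.
  assert (SM : forall n x y, 1 <= n -> Gam n x -> Gam n y -> Gam n (mul x y))
    by (intros; eapply sgM; eauto).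
  assert (SV : forall n x, 1 <= n -> Gam n x -> Gam n (inv x))
    by (intros; eapply sgV; eauto).
  assert (SJ : forall n g h, 1 <= n -> Gam n h -> Gam n (mul (mul g h) (inv g)))
    by (intros; eapply sgJ; eauto).
  assert (mono : forall j k, 1 <= j -> j <= k -> forall x, Gam k x -> Gam j x).
  { intros j k Hj Hjk. induction Hjk; intros x Hx; auto.
    apply IHHjk. apply (proj1 (Hdecr m ltac:(lia))). exact Hx. }
  assert (FA : forall s w m k, is_Zpoint mul inv Gam w -> 2 <= m ->
            Gam m (mul (inv (gamma m)) (mul s (w m))) -> 1 <= k -> k <= m - 1 ->
            Gam k (mul s (w k))).
  { intros s w m k Hw Hm H Hk Hkm.
    destruct (Hgamma m Hm) as [Hg1 _].
    assert (Gam (m-1) (mul s (w m))).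
    { replace (mul s (w m)) with (mul (gamma m) (mul (inv (gamma m)) (mul s (w m))))
        by (gs Hgrp; reflexivity).
      apply SM; [lia | exact Hg1 | apply (mono (m-1) m); [lia|lia|exact H]]. }
    replace (mul s (w k)) with (mul (mul s (w m)) (inv (mul (inv (w k)) (w m))))
      by (gs Hgrp; reflexivity).
    apply SM; [lia| apply (mono k (m-1)); auto | apply SV; [lia| apply Hw; lia]]. }
  assert (FB : forall n g t1 t2 w, 1 <= n -> Gam n (mul (inv g) (mul t1 w)) ->
            Gam n (mul t2 w) -> Gam n (mul (inv g) (mul t1 (inv t2)))).
  { intros n g t1 t2 w Hn Ha Hb.
    replace (mul (inv g) (mul t1 (inv t2))) with
      (mul (mul (inv g) (mul t1 w)) (inv (mul t2 w))) by (gs Hgrp; reflexivity).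
    apply SM; auto. }
  set (lev := fun n a => Gam (n-1) a /\ ~ Gam n a).
  assert (FL : forall n a, 2 <= n -> Gam n (mul (inv (gamma n)) a) -> lev n a).
  { intros n a Hn H. destruct (Hgamma n Hn) as [Hg1 [Hg2 _]]. split.
    - replace a with (mul (gamma n) (mul (inv (gamma n)) a)) by (gs Hgrp; reflexivity).
      apply SM; [lia | exact Hg1 | apply (mono (n-1) n); [lia|lia|exact H]].
    - intro Ha. apply Hg2.
      replace (gamma n) with (mul a (inv (mul (inv (gamma n)) a))) by (gs Hgrp; reflexivity).
      apply SM; [lia | exact Ha | apply SV; [lia|exact H]]. }
  assert (FC : forall m n a, 2 <= m -> 2 <= n -> lev m a -> lev n a -> m = n).
  { intros m n a Hm Hn [Ha1 Ha2] [Hb1 Hb2].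
    destruct (Nat.lt_trichotomy m n) as [Hl|[Hl|Hl]]; auto.
    - exfalso. apply Ha2. apply (mono m (n-1)); [lia|lia|exact Hb1].
    - exfalso. apply Hb2. apply (mono n (m-1)); [lia|lia|exact Ha1]. }
  assert (FLi : forall n a, 2 <= n -> lev n a -> lev n (inv a)).
  { intros n a Hn [Ha1 Ha2]. split.
    - apply SV; [lia|exact Ha1].
    - intro H. apply Ha2. rewrite <- (g_inv_inv Hgrp a). apply SV; [lia|exact H]. }
  assert (P1 : Gam n1 (mul (inv (gamma n1)) (mul s1 (inv s2)))).
  { apply (FB n1 _ _ _ (z n1)); [lia | exact H1 |].
    apply (FA s2 z n2 n1); auto; lia. }
  split; [exact P1|].
  assert (La : lev n1 (mul s1 (inv s2))) by (apply FL; auto).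
  destruct (Nat.lt_trichotomy m1 m2) as [Hl|[Hl|Hl]].
  - left. split; [|].
    + apply (FC m1 n1 (mul s1 (inv s2))); auto. apply FL; auto.
      apply (FB m1 _ _ _ (z' m1)); [lia | exact H1' |].
      apply (FA s2 z' m2 m1); auto; lia.
    + assert (m1 = n1); [|lia].
      apply (FC m1 n1 (mul s1 (inv s2))); auto. apply FL; auto.
      apply (FB m1 _ _ _ (z' m1)); [lia | exact H1' |].
      apply (FA s2 z' m2 m1); auto; lia.
  - subst m2. right. split; [reflexivity|].
    assert (Hg : Gam (m1-1) (mul s1 (inv s2))).
    { replace (mul s1 (inv s2)) with
        (mul (mul s1 (z' (m1-1))) (inv (mul s2 (z' (m1-1))))) by (gs Hgrp; reflexivity).
      apply SM; [lia| |apply SV; [lia|]].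
      - apply (FA s1 z' m1); auto; lia.
      - apply (FA s2 z' m1); auto; lia. }
    destruct La as [La1 La2].
    assert (m1 <= n1).
    { destruct (le_lt_dec m1 n1); auto. exfalso. apply La2.
      apply (mono n1 (m1-1)); [lia|lia|exact Hg]. }
    destruct (Nat.eq_dec m1 n1) as [E|E]; [|lia].
    subst m1. exfalso. destruct (Hgamma n1 Hn1) as [_ [Hg2 _]]. apply Hg2.
    replace (gamma n1) with
      (mul (mul (inv (mul (inv (gamma n1)) (mul s1 (inv s2))))
                (mul (inv (gamma n1)) (mul s1 (z' n1))))
           (inv (mul (inv (gamma n1)) (mul s2 (z' n1))))) by (gs Hgrp; reflexivity).
    apply SM; [lia| apply SM; [lia| apply SV; [lia|exact P1] | exact H1'] | apply SV; [lia|exact H2']].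
  - exfalso.
    assert (Pb : Gam m2 (mul (inv (gamma m2)) (mul s2 (inv s1)))).
    { apply (FB m2 _ _ _ (z' m2)); [lia | exact H2' |].
      apply (FA s1 z' m1 m2); auto; lia. }
    assert (E : m2 = n1).
    { apply (FC m2 n1 (mul s1 (inv s2))); auto.
      replace (mul s1 (inv s2)) with (inv (mul s2 (inv s1))) by (gs Hgrp; reflexivity).
      apply FLi; auto. }
    subst m2. destruct (Hgamma n1 Hn1) as [_ [_ Hg3]]. apply Hg3.
    replace (mul (gamma n1) (gamma n1)) with
      (mul (inv (mul (mul (gamma n1) (mul (inv (gamma n1)) (mul s1 (inv s2)))) (inv (gamma n1))))
           (inv (mul (inv (gamma n1)) (mul s2 (inv s1))))) by (gs Hgrp; reflexivity).
    apply SM; [lia | apply SV; [lia | apply SJ; [lia|exact P1]] | apply SV; [lia|exact Pb]].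
Qed.
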